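(* Let $A=\bigoplus_{j=1}^K C(\mathbb T)\otimes M_{n_j}$ and $B=\bigoplus_{i=1}^L C(\mathbb T)\otimes M_{\ell_i}$, and let $\varphi:A\to B$ be a $*$-homomorphism of Type A with multiplicity constants $(a_{i,j})$. Then $\varphi$ is homotopic to a $*$-homomorphism $\psi:A\to B$ of Type B with the same multiplicity constants $(a_{i,j})$.
   Context: Identify $C(\mathbb T)$ with $\{f\in C([0,1]):f(0)=f(1)\}$ via $t\mapsto e^{2\pi i t}$; thus elements of $C(\mathbb T)\otimes M_n$ are continuous $f:[0,1]\to M_n$ with $f(0)=f(1)$, and for $z\in\mathbb T$, $f(z)\in M_n$ denotes the value at the point $z$. $\Sigma_a$ is the symmetric group; for $\sigma\in\Sigma_a$, $v_\sigma\in\mathcal U_a$ is the permutation matrix with $v_\sigma\,\mathrm{diag}(x_1,\dots,x_a)\,v_\sigma^*=\mathrm{diag}(x_{\sigma^{-1}(1)},\dots,x_{\sigma^{-1}(a)})$. Elementary Type A maps: a $*$-homomorphism $\varphi:C(\mathbb T)\otimes M_n\to C(\mathbb T)\otimes M_\ell$ is of Type A if there is a data tuple $(a,\sigma,\lambda_1,\dots,\lambda_a,w)$ with $a\in\mathbb N_0$, $na\le\ell$, $\sigma\in\Sigma_a$, continuous $\lambda_p:[0,1]\to\mathbb T$ with $\lambda_{\sigma(p)}(0)=\lambda_p(1)$ for all $p$, and a continuous path $w:[0,1]\to\mathcal U_a$ with $w(0)=I_a$, $w(1)=v_\sigma$, such that, with $u(t)=\mathrm{diag}(w(t)\otimes I_n,I_{\ell-na})$,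 $\varphi(f)(t)=u(t)\,\mathrm{diag}(f(\lambda_1(t)),\dots,f(\lambda_a(t)),0_{\ell-na})\,u(t)^*$ for $t\in[0,1]$. The number $a$ is the multiplicity. It is of Type B if moreover $\sigma$ is the identity permutation; of Type C if it is of Type B and $w\equiv I_a$; of Type D if it is of Type C and $\lambda_p(0)=\lambda_p(1)=1$ for every $p$. General case: for $A,B$ as in the claim, $\varphi:A\to B$ is of Type A if $\varphi=(\varphi_1,\dots,\varphi_L)$ with $\varphi_i(g_1,\dots,g_K)=\mathrm{diag}(\varphi_{i,1}(g_1),\dots,\varphi_{i,K}(g_K),0,\dots,0)$, where each $\varphi_{i,j}:C(\mathbb T)\otimes M_{n_j}\to C(\mathbb T)\otimes M_{a_{i,j}n_j}$ is an elementary Type A map of multiplicity $a_{i,j}$ and $\sum_j a_{i,j}n_j\le\ell_i$; the $a_{i,j}$ are the multiplicity constants. $\varphi$ is of Type B (resp. C, D) if every $\varphi_{i,j}$ is. Two $*$-homomorphisms $\varphi_0,\varphi_1:A\to B$ are homotopic if there is a family $(\varphi_s)_{s\in[0,1]}$ of $*$-homomorphisms $A\to B$ with $s\mapsto\varphi_s(x)$ norm continuous for every $x\in A$. *)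

(* Defs.v *)
From HB Require Import structures.
From mathcomp Require Import all_boot all_order all_algebra all_fingroup.
From mathcomp Require Import complex mxtens.
From mathcomp Require Import all_classical all_reals all_analysis.
Set Implicit Arguments. Unset Strict Implicit. Unset Printing Implicit Defensive.
Import Order.TTheory GRing.Theory Num.Theory.
Local Open Scope ring_scope.
Local Open Scope classical_set_scope.

Section Defs.
Variable R : realType.

Definition cabs (z : R[i]) : R := Normc.normc z.

Definition in01 (t : R) : Prop := 0 <= t <= 1.

Definition adjmx m n (M : 'M[R[i]]_(m, n)) : 'M[R[i]]_(n, m) := (map_mx conjc M)^T.

Definition unitarymx a (M : 'M[R[i]]_a) : Prop :=
  M *m adjmx M = 1%:M /\ adjmx M *m M = 1%:M.

Definition cont01C (f : R -> R[i]) : Prop :=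
  forall t0, in01 t0 -> forall e : R, 0 < e -> exists2 d : R, 0 < d &
    forall t, in01 t -> `|t - t0| < d -> cabs (f t - f t0) < e.

Definition cont01M m n (f : R -> 'M[R[i]]_(m, n)) : Prop :=
  forall t0, in01 t0 -> forall e : R, 0 < e -> exists2 d : R, 0 < d &
    forall t, in01 t -> `|t - t0| < d ->
      forall k l, cabs (f t k l - f t0 k l) < e.

(* elements of C(T) (x) M_n : continuous f : [0,1] -> M_n with f 0 = f 1 *)
Definition CTM n (f : R -> 'M[R[i]]_n) : Prop := cont01M f /\ f 0 = f 1.

Definition expi (s : R) : R[i] := Complex (cos (2 * pi * s)) (sin (2 * pi * s)).

(* value of f at the point z of T: f(s) for some s in [0,1] with e^{2 pi i s} = z
   (well defined on T since f 0 = f 1) *)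
Definition evalT n (f : R -> 'M[R[i]]_n) (z : R[i]) : 'M[R[i]]_n :=
  f (xget 0 [set s | in01 s /\ expi s = z]).

(* permutation matrix v_sigma with v diag(x) v^* = diag(x_{sigma^-1 1}, ...) *)
Definition vperm a (sigma : 'S_a) : 'M[R[i]]_a :=
  \matrix_(i, j) ((i == sigma j)%:R).

(* direct sums: A = (+)_{j<K} C(T) (x) M_{n_j} *)
Definition Alg K (n : 'I_K -> nat) := forall j : 'I_K, R -> 'M[R[i]]_(n j).

Definition inAlg K (n : 'I_K -> nat) (g : Alg n) : Prop := forall j, CTM (g j).

Definition eqAlg K (n : 'I_K -> nat) (g h : Alg n) : Prop :=
  forall j t, in01 t -> g j t = h j t.

Definition addA K (n : 'I_K -> nat) (g h : Alg n) : Alg n :=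
  fun j t => g j t + h j t.
Definition scaleA K (n : 'I_K -> nat) (c : R[i]) (g : Alg n) : Alg n :=
  fun j t => c *: g j t.
Definition mulA K (n : 'I_K -> nat) (g h : Alg n) : Alg n :=
  fun j t => g j t *m h j t.
Definition starA K (n : 'I_K -> nat) (g : Alg n) : Alg n :=
  fun j t => adjmx (g j t).

Definition is_starhom K L (n : 'I_K -> nat) (l : 'I_L -> nat)
    (phi : Alg n -> Alg l) : Prop :=
  (forall g, inAlg g -> inAlg (phi g)) /\
  (forall g h, inAlg g -> inAlg h ->
     eqAlg (phi (addA g h)) (addA (phi g) (phi h))) /\
  (forall c g, inAlg g -> eqAlg (phi (scaleA c g)) (scaleA c (phi g))) /\
  (forall g h, inAlg g -> inAlg h ->
     eqAlg (phi (mulA g h)) (mulA (phi g) (phi h))) /\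
  (forall g, inAlg g -> eqAlg (phi (starA g)) (starA (phi g))).

Definition elemFormula n a (lam : 'I_a -> R -> R[i]) (w : R -> 'M[R[i]]_a)
    (f : R -> 'M[R[i]]_n) (t : R) : 'M[R[i]]_(a * n) :=
  let u := w t *t (1%:M : 'M[R[i]]_n) in
  u *m (\sum_(p < a) (delta_mx p p : 'M[R[i]]_a) *t evalT f (lam p t)) *m adjmx u.

Definition elem_data a (sigma : 'S_a) (lam : 'I_a -> R -> R[i])
    (w : R -> 'M[R[i]]_a) : Prop :=
  (forall p, cont01C (lam p) /\ forall t, in01 t -> cabs (lam p t) = 1) /\
  (forall p, lam (sigma p) 0 = lam p 1) /\
  cont01M w /\ (forall t, in01 t -> unitarymx (w t)) /\
  w 0 = 1%:M /\ w 1 = vperm sigma.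

(* elementary Type A (isB = false) / Type B (isB = true) map of multiplicity a
   from C(T) (x) M_n to C(T) (x) M_{a n} *)
Definition elemType (isB : bool) n a
    (Phi : (R -> 'M[R[i]]_n) -> (R -> 'M[R[i]]_(a * n))) : Prop :=
  exists sigma lam w,
    elem_data sigma lam w /\ (isB -> sigma = 1%g) /\
    forall f, CTM f -> forall t, in01 t -> Phi f t = elemFormula lam w f t.

Definition padmx s l (M : 'M[R[i]]_s) : 'M[R[i]]_l :=
  \matrix_(k, k')
    match (insub (nat_of_ord k) : option 'I_s), (insub (nat_of_ord k') : option 'I_s) with
    | Some x, Some y => M x y
    | _, _ => 0
    end.

Definition mapType (isB : bool) K L (n : 'I_K -> nat) (l : 'I_L -> nat)
    (phi : Alg n -> Alg l) (a : 'I_L -> 'I_K -> nat) : Prop :=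
  (forall i, \sum_(j < K) a i j * n j <= l i)%N /\
  exists Phi : forall (i : 'I_L) (j : 'I_K),
      (R -> 'M[R[i]]_(n j)) -> (R -> 'M[R[i]]_(a i j * n j)),
    (forall i j, elemType isB (Phi i j)) /\
    forall g, inAlg g -> forall i t, in01 t ->
      phi g i t = @padmx _ (l i) (\mxdiag_(j < K) Phi i j (g j) t).

Definition typeA K L (n : 'I_K -> nat) (l : 'I_L -> nat) phi a :=
  @mapType false K L n l phi a.
Definition typeB K L (n : 'I_K -> nat) (l : 'I_L -> nat) phi a :=
  @mapType true K L n l phi a.

(* s |-> phis s x is norm continuous on [0,1] for every x in A
   (norm: sup over t in [0,1] and matrix entries of the modulus) *)
Definition pointwise_norm_cont K L (n : 'I_K -> nat) (l : 'I_L -> nat)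
    (phis : R -> Alg n -> Alg l) : Prop :=
  forall g, inAlg g -> forall s0, in01 s0 -> forall e : R, 0 < e ->
    exists2 d : R, 0 < d & forall s, in01 s -> `|s - s0| < d ->
      forall i t, in01 t -> forall k k',
        cabs (phis s g i t k k' - phis s0 g i t k k') < e.

End Defs.

(* Main.v *)
Require Import Defs.
From HB Require Import structures.
From mathcomp Require Import all_boot all_order all_algebra all_fingroup.
From mathcomp Require Import complex mxtens.
From mathcomp Require Import all_classical all_reals all_analysis.
From mathcomp Require Import ring lra.
Import Order.TTheory GRing.Theory Num.Theory.
Import numFieldNormedType.Exports.
Local Open Scope ring_scope.
Set Implicit Arguments. Unset Strict Implicit. Unset Printing Implicit Defensive.
Section P1.
Variable R : realType.

Definition contP (D : R -> R -> R -> Prop) (a b : R) :=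
  forall x0, a <= x0 <= b -> forall e : R, 0 < e -> exists2 d : R, 0 < d &
    forall x, a <= x <= b -> `|x - x0| < d -> D x x0 e.

Lemma contP_glue D a c b : a <= c -> c <= b -> contP D a c -> contP D c b -> contP D a b.
Proof.
move=> ac cb H1 H2 x0 /andP[ax0 x0b] e e0.
have [x0c|cx0|->] := ltgtP x0 c.
- have [d d0 Hd] := H1 x0 (ltac:(by rewrite ax0 ltW)) e e0.
  exists (Order.min d (c - x0)); first by rewrite lt_min d0 subr_gt0.
  move=> x /andP[ax xb]; rewrite lt_min => /andP[xd xc]; apply: Hd => //.
  rewrite ax /=; move: xc; rewrite ltr_norml => /andP[_] h; lra.
- have [d d0 Hd] := H2 x0 (ltac:(by rewrite x0b ltW)) e e0.
  exists (Order.min d (x0 - c)); first by rewrite lt_min d0 subr_gt0.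
  move=> x /andP[ax xb]; rewrite lt_min => /andP[xd xc]; apply: Hd => //.
  rewrite xb andbT; move: xc; rewrite ltr_norml => /andP[+ _].
  move=> h; lra.
- have [d1 d10 Hd1] := H1 c (ltac:(by rewrite ac lexx)) e e0.
  have [d2 d20 Hd2] := H2 c (ltac:(by rewrite cb lexx)) e e0.
  exists (Order.min d1 d2); first by rewrite lt_min d10 d20.
  move=> x /andP[ax xb]; rewrite lt_min => /andP[xd1 xd2].
  have [xc|cx] := leP x c.
    by apply: Hd1 => //; rewrite ax xc.
  by apply: Hd2 => //; rewrite xb ltW.
Qed.

Lemma contP_ext (D D' : R -> R -> R -> Prop) a b :
  (forall x y e, a <= x <= b -> a <= y <= b -> D x y e -> D' x y e) ->
  contP D a b -> contP D' a b.
Proof.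
move=> H HD x0 hx0 e e0; have [d d0 Hd] := HD x0 hx0 e e0.
by exists d => // x hx xd; apply: H => //; apply: Hd.
Qed.

Lemma contP_comp (D : R -> R -> R -> Prop) a b c d (h : R -> R) (K : R) :
  0 < K -> (forall x, c <= x <= d -> a <= h x <= b) ->
  (forall x y, c <= x <= d -> c <= y <= d -> `|h x - h y| <= K * `|x - y|) ->
  contP D a b -> contP (fun x y e => D (h x) (h y) e) c d.
Proof.
move=> K0 hab hl HD x0 hx0 e e0.
have [d1 d10 Hd] := HD (h x0) (hab _ hx0) e e0.
exists (d1 / K); first by rewrite divr_gt0.
move=> x hx xd; apply: Hd; first exact: hab.
apply: (le_lt_trans (hl _ _ hx hx0)).
by rewrite -ltr_pdivlMl // mulrC.
Qed.

Lemma fin_delta (n : nat) (P : 'I_n -> R -> Prop) :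
  (forall k d d', P k d -> 0 < d' -> d' <= d -> P k d') ->
  (forall k, exists2 d, 0 < d & P k d) ->
  exists2 d, 0 < d & forall k, P k d.
Proof.
elim: n P => [|n IH] P Hmon Hex.
  by exists 1 => // -[].
have [d0 d00 Hd0] := Hex ord0.
have [d1 d10 Hd1] := IH (fun k => P (lift ord0 k))
  (fun k => Hmon (lift ord0 k)) (fun k => Hex (lift ord0 k)).
exists (Order.min d0 d1); first by rewrite lt_min d00 d10.
move=> k; case: (unliftP ord0 k) => [k'|] ->.
  by apply: Hmon (Hd1 k') _ _; rewrite ?lt_min ?d00 ?d10 ?ge_min ?lexx ?orbT.
by apply: Hmon Hd0 _ _; rewrite ?lt_min ?d00 ?d10 ?ge_min ?lexx.
Qed.

Lemma fin_bound (n : nat) (f : 'I_n -> R) :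
  (forall k, 0 <= f k < 1) -> exists T, [/\ 0 <= T, T < 1 & forall k, f k <= T].
Proof.
elim: n f => [|n IH] f Hf.
  by exists 0; split => // -[].
have [T [T0 T1 HT]] := IH (fun k => f (lift ord0 k)) (fun k => Hf (lift ord0 k)).
have /andP[f0 f1] := Hf ord0.
exists (Order.max T (f ord0)); split.
- by rewrite le_max T0.
- by rewrite gt_max T1 f1.
move=> k; case: (unliftP ord0 k) => [k'|] ->.
  by rewrite le_max HT.
by rewrite le_max lexx orbT.
Qed.

End P1.
Section P2.
Variable R : realType.
Local Open Scope classical_set_scope.

Lemma HC (D : R -> R -> R -> Prop) a b : a <= b ->
  (forall x y e, D x y e -> D y x e) ->
  (forall x y z e1 e2, D x y e1 -> D y z e2 -> D x z (e1 + e2)) ->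
  contP D a b ->
  forall e : R, 0 < e -> exists2 d : R, 0 < d &
    forall x y, a <= x <= b -> a <= y <= b -> `|x - y| < d -> D x y e.
Proof.
move=> ab Dsym Dtr HD e e0.
pose U c := exists2 d : R, 0 < d &
    forall x y, a <= x <= c -> a <= y <= c -> `|x - y| < d -> D x y e.
pose S := [set c | a <= c <= b /\ U c].
have Sa : S a.
  split; first by rewrite lexx ab.
  exists 1 => // x y hx hy _.
  have -> : x = a by apply/eqP; rewrite eq_le; case/andP: hx => -> ->.
  have -> : y = a by apply/eqP; rewrite eq_le; case/andP: hy => -> ->.
  have [d d0 Hd] := HD a (ltac:(by rewrite lexx ab)) e e0.
  by apply: Hd; rewrite ?subrr ?normr0 ?lexx ?ab.
have Sub : has_ubound S by exists b => c [/andP[_ ->]].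
have Ssup : has_sup S by split => //; exists a.
set s := sup S.
have as_ : a <= s by apply: sup_upper_bound.
have sb : s <= b by apply: ge_sup; [exists a | move=> c [/andP[_ ->]]].
have e20 : 0 < e / 2 by rewrite divr_gt0.
have [dl dl0 Hdl] := HD s (ltac:(by rewrite as_ sb)) (e / 2) e20.
have dl20 : 0 < dl / 2 by rewrite divr_gt0.
have [c [/andP[ac cb] [dc dc0 Hdc]] sc] := sup_adherent dl20 Ssup.
rewrite -/s in sc.
pose c' := Order.min b (s + dl / 2).
have Sc' : S c'.
  split; first (apply/andP; split; [rewrite le_min ab /=; lra | by rewrite ge_min lexx]).
  exists (Order.min dc (dl / 2)); first by rewrite lt_min dc0 dl20.
  move=> x y /andP[ax xc'] /andP[ay yc']; rewrite lt_min => /andP[xyc xyd].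
  have xb : x <= b by move: xc'; rewrite le_min => /andP[].
  have yb : y <= b by move: yc'; rewrite le_min => /andP[].
  have xs : x <= s + dl / 2 by move: xc'; rewrite le_min => /andP[].
  have ys : y <= s + dl / 2 by move: yc'; rewrite le_min => /andP[].
  have [xc|cx] := leP x c; have [yc|cy] := leP y c.
  - by apply: Hdc => //; rewrite ?ax ?ay.
  - have h1 : `|y - s| < dl by rewrite ltr_norml; apply/andP; split; lra.
    have h2 : `|x - s| < dl.
      move: xyd; rewrite ltr_norml => /andP[u v].
      by rewrite ltr_norml; apply/andP; split; lra.
    have := Dtr _ _ _ _ _ (Hdl x (ltac:(by rewrite ax)) h2)
                          (Dsym _ _ _ (Hdl y (ltac:(by rewrite ay)) h1)).
    by rewrite -splitr.
  - have h1 : `|x - s| < dl by rewrite ltr_norml; apply/andP; split; lra.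
    have h2 : `|y - s| < dl.
      move: xyd; rewrite ltr_norml => /andP[u v].
      by rewrite ltr_norml; apply/andP; split; lra.
    have := Dtr _ _ _ _ _ (Hdl x (ltac:(by rewrite ax)) h1)
                          (Dsym _ _ _ (Hdl y (ltac:(by rewrite ay)) h2)).
    by rewrite -splitr.
  - have h1 : `|x - s| < dl by rewrite ltr_norml; apply/andP; split; lra.
    have h2 : `|y - s| < dl by rewrite ltr_norml; apply/andP; split; lra.
    have := Dtr _ _ _ _ _ (Hdl x (ltac:(by rewrite ax)) h1)
                          (Dsym _ _ _ (Hdl y (ltac:(by rewrite ay)) h2)).
    by rewrite -splitr.
have c's : c' <= s by apply: sup_upper_bound.
have c'b : c' = b.
  have [bl|lb] := leP b (s + dl / 2).
    by apply/eqP; rewrite eq_le ge_min lexx /= le_min lexx bl.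
  by move: c's; rewrite ge_min => /orP[h|h]; lra.
move: Sc'; rewrite /S /= => -[_ [d d0 Hd]]; exists d => // x y hx hy xy.
move: c'b; rewrite /c' => h.
have hb : b <= s + dl / 2 by rewrite -[b in b <= _]h ge_min lexx orbT.
move: hx hy => /andP[ax xb] /andP[ay yb].
by apply: Hd => //; rewrite ?ax ?ay le_min ?xb ?yb /=; lra.
Qed.

End P2.
Section P3.
Variable R : realType.
Local Notation C := (R[i]).
Local Notation cabs := (@cabs R).
Local Notation expi := (@expi R).

Lemma cabs_ge0 (z : C) : 0 <= cabs z.
Proof. by case: z => x y; rewrite /cabs /Normc.normc sqrtr_ge0. Qed.

Lemma cabsB (x y : C) : cabs (x - y) = cabs (y - x).
Proof. by rewrite -opprB /cabs (normcN (y - x)). Qed.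

Lemma cabsD (x y : C) : cabs (x + y) <= cabs x + cabs y.
Proof. exact: (le_normcD x y). Qed.

Lemma cabs_tri (x y z : C) : cabs (x - z) <= cabs (x - y) + cabs (y - z).
Proof. by have := cabsD (x - y) (y - z); rewrite addrA subrK. Qed.

Lemma cabsM (x y : C) : cabs (x * y) = cabs x * cabs y.
Proof. exact: Normc.normcM. Qed.

Lemma cabs0 : cabs 0 = 0.
Proof. exact: Normc.normc0. Qed.

Lemma cabs_le (a b : R) : cabs (a +i* b)%C <= `|a| + `|b|.
Proof.
rewrite /cabs /Normc.normc.
rewrite -(@ger0_norm _ (`|a| + `|b|)) ?addr_ge0 // -sqrtr_sqr.
apply: ler_wsqrtr.
rewrite sqrrD !real_normK ?num_real //.
have : 0 <= `|a| * `|b| *+ 2 by rewrite mulrn_wge0 // mulr_ge0.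
lra.
Qed.

End P3.
Section P4.
Variable R : realType.
Local Notation C := (R[i]).
Local Notation cabs := (@cabs R).
Local Notation expi := (@expi R).

Lemma cont_ed (f : R -> R) (x : R) : {for x, continuous f} -> forall e : R, 0 < e ->
  exists2 d : R, 0 < d & forall y, `|x - y| < d -> `|f x - f y| < e.
Proof.
move=> /cvgr_dist_lt H e he.
have := H e he; move=> /nbhs_ballP [d /= d0 Hd].
by exists d => // y xy; apply: Hd.
Qed.

Lemma expi_norm x : cabs (expi x) = 1.
Proof.
by rewrite /cabs /expi /Normc.normc cos2Dsin2 sqrtr1.
Qed.

Lemma pi2_gt0 : 0 < 2 * pi :> R.
Proof. by rewrite mulr_gt0 ?pi_gt0. Qed.

Lemma expi_cont x (e : R) : 0 < e -> exists2 d : R, 0 < d &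
  forall y, `|y - x| < d -> cabs (expi y - expi x) < e.
Proof.
move=> e0; have e20 : 0 < e / 2 by rewrite divr_gt0.
have [d1 d10 H1] := cont_ed (@continuous_cos R (2 * pi * x)) e20.
have [d2 d20 H2] := cont_ed (@continuous_sin R (2 * pi * x)) e20.
have p0 := pi2_gt0.
exists (Order.min d1 d2 / (2 * pi)); first by rewrite divr_gt0 // lt_min d10 d20.
move=> y xy.
have hy : `|2 * pi * x - 2 * pi * y| < Order.min d1 d2.
  rewrite -mulrBr normrM (gtr0_norm p0) distrC mulrC -ltr_pdivlMr //.

have hm1 : Order.min d1 d2 <= d1 by rewrite ge_min; apply/orP; left.
have hm2 : Order.min d1 d2 <= d2 by rewrite ge_min; apply/orP; right.
have hc := H1 _ (lt_le_trans hy hm1).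
have hs := H2 _ (lt_le_trans hy hm2).
apply: le_lt_trans (cabs_le (cos (2 * pi * y) - cos (2 * pi * x))
   (sin (2 * pi * y) - sin (2 * pi * x))) _.
rewrite distrC in hc; rewrite distrC in hs.
by rewrite (splitr e) ltrD.
Qed.

End P4.
Section P5.
Variable R : realType.
Local Notation C := (R[i]).
Local Notation cabs := (@cabs R).
Local Notation expi := (@expi R).

Lemma two_pi_mul1 : 2 * pi * 1 = pi *+ 2 :> R.
Proof. by rewrite mulr1 mulr_natl. Qed.

Lemma expi1 : expi 1 = expi 0.
Proof.
by rewrite /expi two_pi_mul1 cos2pi sin2pi mulr0 cos0 sin0.
Qed.

Lemma cos_eq1 (w : R) : 0 <= w <= pi *+ 2 -> cos w = 1 -> w = 0 \/ w = pi *+ 2.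
Proof.
move=> /andP[w0 w2] cw.
have pi0 := @pi_gt0 R.
have [wp|pw] := leP w pi.
  left; apply: (@cos_inj R); rewrite ?in_itv /= ?w0 ?wp ?lexx ?pi_ge0 //.
  by rewrite cw cos0.
right.
have h : cos (pi *+ 2 - w) = 1.
  by rewrite addrC cosD2pi cosN.
have : pi *+ 2 - w = 0.
  apply: (@cos_inj R); rewrite ?in_itv /= ?lexx ?pi_ge0 //.
  - by apply/andP; split; rewrite mulr2n; lra.
  - by rewrite h cos0.
by move=> h2; lra.
Qed.

Lemma expi_inj s r : in01 s -> in01 r -> expi s = expi r ->
  s = r \/ (s = 0 /\ r = 1) \/ (s = 1 /\ r = 0).
Proof.
rewrite /in01 => /andP[s0 s1] /andP[r0 r1] [hc hs].
have pi0 := @pi_gt0 R.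
have h1 : cos (2 * pi * s - 2 * pi * r) = 1.
  by rewrite cosB hc hs -!expr2 cos2Dsin2.
have h2 : cos `|2 * pi * s - 2 * pi * r| = 1 by rewrite cos_norm.
have hb : 0 <= `|2 * pi * s - 2 * pi * r| <= pi *+ 2.
  rewrite normr_ge0 /= -mulrBr normrM (gtr0_norm (pi2_gt0 R)) mulr_natl mulr2n.
  have : `|s - r| <= 1 by rewrite ler_norml; apply/andP; split; lra.
  move=> h; rewrite -mulr2n -mulr_natl.
  by rewrite -[X in _ <= X]mulr1 ler_pM2l ?mulr_gt0.
case: (cos_eq1 hb h2) => /eqP.
  rewrite normr_eq0 subr_eq0 => /eqP h; left.
  by apply: (mulfI (lt0r_neq0 (pi2_gt0 R))).
rewrite -mulrBr normrM (gtr0_norm (pi2_gt0 R)) -two_pi_mul1.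
rewrite (inj_eq (mulfI (lt0r_neq0 (pi2_gt0 R)))) => /eqP.
case: (lerP 0 (s - r)) => h; [rewrite ger0_norm // | rewrite ltr0_norm //] => h'; right; 
  [right | left]; split; lra.
Qed.

Lemma expi_surj (z : C) : cabs z = 1 -> exists s, in01 s /\ expi s = z.
Proof.
case: z => x y; rewrite /cabs /Normc.normc => h.
have hxy : x ^+ 2 + y ^+ 2 = 1.
  have h0 : 0 <= x ^+ 2 + y ^+ 2 by rewrite addr_ge0 ?sqr_ge0.
  by rewrite -(sqr_sqrtr h0) h expr1n.
have hx : x \in `[(-1), 1].
  rewrite in_itv /=; have := sqr_ge0 y => hy.
  have hx2 : x ^+ 2 <= 1 by lra.
  have : `|x| <= 1 by rewrite -(ler_pXn2r (_ : 0 < 2)%N) ?nnegrE ?normr_ge0 // expr1n real_normK ?num_real.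
  by rewrite ler_norml.
have hx' : -1 <= x <= 1 by move: hx; rewrite in_itv.
have pi0 := @pi_gt0 R.
have a0 := acos_ge0 hx'; have ap := acos_lepi hx'.
have ca := acosK hx.
have sa : sin (acos x) = `|y|.
  rewrite sin_acos // -sqrtr_sqr; congr Num.sqrt; lra.
have p2 := @pi2_gt0 R.
case: (lerP 0 y) => hy.
  exists (acos x / (2 * pi)); split.
    rewrite /in01 divr_ge0 ?(ltW p2) //= ler_pdivrMr // mul1r.
    rewrite mulr_natl mulr2n; lra.
  rewrite /expi mulrC divfK ?lt0r_neq0 // ca sa ger0_norm //.
exists (1 - acos x / (2 * pi)); split.
  rewrite /in01; apply/andP; split.
    rewrite subr_ge0 ler_pdivrMr // mul1r mulr_natl mulr2n; lra.
  by rewrite lerBlDr lerDl divr_ge0 ?(ltW p2).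
rewrite /expi.
have -> : 2 * pi * (1 - acos x / (2 * pi)) = - acos x + pi *+ 2.
  rewrite mulrBr mulr1 [_ * (acos x / _)]mulrC divfK ?lt0r_neq0 //.
  by rewrite addrC mulr_natl.
by rewrite cosD2pi sinD2pi cosN sinN ca sa ltr0_norm // opprK.
Qed.

End P5.
Section P6.
Variable R : realType.
Local Notation C := (R[i]).
Local Notation cabs := (@cabs R).
Local Notation expi := (@expi R).
Local Open Scope classical_set_scope.

Definition theta (c : C) : R := xget 0 [set s | in01 s /\ expi s = c].
Definition thetap (c : C) : R := if theta c == 1 then 0 else theta c.

Lemma theta01 c : in01 (theta c).
Proof.
rewrite /theta; case: xgetP => [x -> [] //|_].
by rewrite /in01 lexx ler01.
Qed.

Lemma theta_expi c : cabs c = 1 -> expi (theta c) = c.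
Proof.
move=> /expi_surj [s hs]; rewrite /theta.
have hex : exists s, in01 s /\ expi s = c by exists s.
by case: (xgetPex 0 hex).
Qed.

Lemma thetap01 c : 0 <= thetap c < 1.
Proof.
rewrite /thetap; case: eqP => [_|]; first by rewrite lexx ltr01.
by have /andP[h0 h1] := theta01 c; rewrite h0 lt_neqAle h1 andbT => /eqP.
Qed.

Lemma thetap_expi c : cabs c = 1 -> expi (thetap c) = c.
Proof.
move=> h; rewrite /thetap; case: eqP => [e|_]; last exact: theta_expi.
by rewrite -expi1 -e theta_expi.
Qed.

Lemma evalTE n (f : R -> 'M[C]_n) z : evalT f z = f (theta z).
Proof. by []. Qed.

Lemma evalT_expi n (f : R -> 'M[C]_n) r : f 0 = f 1 -> in01 r -> evalT f (expi r) = f r.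
Proof.
move=> f01 hr; rewrite evalTE /theta.
have hex : exists s, in01 s /\ expi s = expi r by exists r.
case: (xgetPex 0 hex) => hs he.
by case: (expi_inj hs hr he) => [->|[[-> ->]|[-> ->]]].
Qed.

Lemma evalT_theta_p n (f : R -> 'M[C]_n) z : f 0 = f 1 -> f (thetap z) = evalT f z.
Proof.
move=> f01; rewrite evalTE /thetap; case: eqP => // ->; by [].
Qed.

End P6.
Section P7.
Variable R : realType.
Local Notation C := (R[i]).
Local Notation cabs := (@cabs R).

Definition mbound m n (M : 'M[C]_(m, n)) (b : R) := forall k l, cabs (M k l) <= b.

Lemma padmxB s l (A B : 'M[C]_s) : padmx l (A - B) = padmx l A - padmx l B.
Proof.
apply/matrixP => k k'; rewrite !mxE.
by case: (insub (k : nat) : option 'I_s) => [x|]; case: (insub (k' : nat) : option 'I_s) => [y|]; rewrite ?mxE ?subr0.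
Qed.

Lemma padmx_bound s l (A : 'M[C]_s) b : mbound A b -> 0 <= b -> mbound (padmx l A) b.
Proof.
move=> hA b0 k k'; rewrite !mxE.
by case: (insub (k : nat) : option 'I_s) => [x|]; case: (insub (k' : nat) : option 'I_s) => [y|]; rewrite ?cabs0.
Qed.

Lemma conform_bound m n m' n' (A : 'M[C]_(m, n)) b : mbound A b -> 0 <= b ->
  mbound (conform_mx (0 : 'M[C]_(m', n')) A) b.
Proof.
move=> hA b0 k k'; rewrite /conform_mx.
case: eqP => [e1|_]; last by rewrite mxE cabs0.
case: eqP => [e2|_]; last by rewrite mxE cabs0.
by rewrite castmxE.
Qed.

Lemma mxdiag_bound K (p : 'I_K -> nat) (B : forall j, 'M[C]_(p j)) b :
  (forall j, mbound (B j) b) -> 0 <= b -> mbound (mxdiag B) b.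
Proof.
move=> hB b0 k k'; rewrite /mxdiag /mxblock mxE.
case: (_ == _); last by rewrite mxE cabs0.
exact: conform_bound.
Qed.

Lemma tens_sum_entry a n (D : 'I_a -> 'M[C]_n) (p1 p2 : 'I_a) (k l : 'I_n) :
  (\sum_(p < a) delta_mx p p *t D p) (mxtens_index (p1, k)) (mxtens_index (p2, l))
  = if p1 == p2 then D p1 k l else 0.
Proof.
rewrite summxE (bigD1 p1) //= tensmxE mxE eqxx /=.
rewrite big1 ?addr0.
  by rewrite eq_sym; case: (p1 == p2); rewrite ?mul1r ?mul0r.
move=> p hp; rewrite tensmxE mxE.
by rewrite (eq_sym p1 p) (negbTE hp) mul0r.
Qed.

Lemma tens_sum_bound a n (D : 'I_a -> 'M[C]_n) b :
  (forall p, mbound (D p) b) -> 0 <= b ->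
  mbound (\sum_(p < a) delta_mx p p *t D p) b.
Proof.
move=> hD b0 k k'.
case: (mxtens_indexP k) => p1 k1; case: (mxtens_indexP k') => p2 k2.
rewrite tens_sum_entry; case: eqP => _; first exact: hD.
by rewrite cabs0.
Qed.

Lemma tensmxBr m n p q (A : 'M[C]_(m, n)) (B B' : 'M[C]_(p, q)) :
  A *t (B - B') = A *t B - A *t B'.
Proof. by apply/matrixP => i j; rewrite !mxE mulrBr. Qed.

Lemma tens_sumB a n (F G : 'I_a -> 'M[C]_n) :
  \sum_(p < a) delta_mx p p *t F p - \sum_(p < a) delta_mx p p *t G p
  = \sum_(p < a) delta_mx p p *t (F p - G p).
Proof. by rewrite -sumrB; apply: eq_bigr => p _; rewrite tensmxBr. Qed.

Lemma tens11 a n : (1%:M : 'M[C]_a) *t (1%:M : 'M[C]_n) = 1%:M.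
Proof.
apply/matrixP => k k'.
case: (mxtens_indexP k) => p1 k1; case: (mxtens_indexP k') => p2 k2.
rewrite tensmxE !mxE.
rewrite (inj_eq (can_inj (@mxtens_indexK _ _))) xpair_eqE.
by case: (p1 == p2); case: (k1 == k2); rewrite ?mulr1n ?mulr0n ?mul1r ?mul0r.
Qed.

Lemma adjmx1 a : adjmx (1%:M : 'M[C]_a) = 1%:M.
Proof. by rewrite /adjmx map_mx1 trmx1. Qed.

Lemma adjmx_tens m n p q (A : 'M[C]_(m, n)) (B : 'M[C]_(p, q)) :
  adjmx (A *t B) = adjmx A *t adjmx B.
Proof. by rewrite /adjmx map_mxT trmx_tens. Qed.

Lemma tens_suml a n (D : 'I_a -> 'M[C]_a) (F : 'M[C]_n) :
  \sum_(p < a) D p *t F = (\sum_(p < a) D p) *t F.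
Proof.
apply/matrixP => i j; rewrite !mxE summxE summxE mulr_suml.
by apply: eq_bigr => p _; rewrite mxE.
Qed.

Lemma sum_delta a : \sum_(p < a) (delta_mx p p : 'M[C]_a) = 1%:M.
Proof.
apply/matrixP => i j; rewrite summxE !mxE.
rewrite (bigD1 i) //= mxE eqxx /= big1 ?addr0.
  by case: eqP => [->|ne]; rewrite ?eqxx //; case: eqP => // e; case: ne.
by move=> p hp; rewrite mxE (eq_sym i p) (negbTE hp).
Qed.

Lemma lemmaK a n (U : 'M[C]_a) (F : 'M[C]_n) : Defs.unitarymx U ->
  (U *t 1%:M) *m (\sum_(p < a) delta_mx p p *t F) *m adjmx (U *t 1%:M)
  = \sum_(p < a) delta_mx p p *t F.
Proof.
move=> [hU _].
rewrite tens_suml sum_delta adjmx_tens adjmx1 !tensmx_mul.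
by rewrite mulmx1 hU mul_scalar_mx scale1r mulmx1.
Qed.

End P7.
Section P8.
Variable R : realType.
Local Notation C := (R[i]).
Local Notation cabs := (@cabs R).
Local Notation expi := (@expi R).

Definition ccl (f : R -> C) : R -> R -> R -> Prop := fun x y (e : R) => cabs (f x - f y) < e.
Definition mcl m n (f : R -> 'M[C]_(m, n)) :=
  fun x y (e : R) => forall k l, cabs (f x k l - f y k l) < e.

Lemma ccl_ext (f g : R -> C) a b : (forall x, a <= x <= b -> f x = g x) ->
  contP (ccl g) a b -> contP (ccl f) a b.
Proof. by move=> h; apply: contP_ext => x y e hx hy; rewrite /ccl !h. Qed.

Lemma mcl_ext m n (f g : R -> 'M[C]_(m, n)) a b : (forall x, a <= x <= b -> f x = g x) ->
  contP (mcl g) a b -> contP (mcl f) a b.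
Proof. by move=> h; apply: contP_ext => x y e hx hy; rewrite /mcl !h. Qed.

Lemma affine_lip (al be : R) x y :
  `|(al * x + be) - (al * y + be)| <= (`|al| + 1) * `|x - y|.
Proof.
rewrite opprD addrACA subrr addr0 -mulrBr normrM ler_wpM2r ?normr_ge0 //.
by rewrite lerDl.
Qed.

Lemma ccl_affine (f : R -> C) a b c d al be :
  (forall x, c <= x <= d -> a <= al * x + be <= b) ->
  contP (ccl f) a b -> contP (ccl (fun x => f (al * x + be))) c d.
Proof.
move=> hr hf.
have := @contP_comp _ (ccl f) a b c d (fun x => al * x + be) (`|al| + 1)
  (ltr_pwDr ltr01 (normr_ge0 _)) hr (fun x y _ _ => affine_lip al be x y) hf.
by apply: contP_ext.
Qed.

Lemma mcl_affine m n (f : R -> 'M[C]_(m, n)) a b c d al be :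
  (forall x, c <= x <= d -> a <= al * x + be <= b) ->
  contP (mcl f) a b -> contP (mcl (fun x => f (al * x + be))) c d.
Proof.
move=> hr hf.
have := @contP_comp _ (mcl f) a b c d (fun x => al * x + be) (`|al| + 1)
  (ltr_pwDr ltr01 (normr_ge0 _)) hr (fun x y _ _ => affine_lip al be x y) hf.
by apply: contP_ext.
Qed.

Lemma expi_affine c d al be : contP (ccl (fun x => expi (al * x + be))) c d.
Proof.
move=> x0 hx0 e e0.
have [d1 d10 H] := expi_cont (al * x0 + be) e0.
have K0 : 0 < `|al| + 1 by rewrite ltr_pwDr ?ltr01 ?normr_ge0.
exists (d1 / (`|al| + 1)); first by rewrite divr_gt0.
move=> x hx xd; apply: H.
apply: le_lt_trans (affine_lip al be x x0) _.
by rewrite mulrC -ltr_pdivlMr.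
Qed.

Lemma contP_const (D : R -> R -> R -> Prop) a b :
  (forall x y e, 0 < e -> D x y e) -> contP D a b.
Proof. by move=> h x0 _ e e0; exists 1 => // x _ _; apply: h. Qed.

Lemma mcl_const m n (M : 'M[C]_(m, n)) a b : contP (mcl (fun _ => M)) a b.
Proof. by apply: contP_const => x y e e0 k l; rewrite subrr cabs0. Qed.

Lemma ccl_const (z : C) a b : contP (ccl (fun _ => z)) a b.
Proof. by apply: contP_const => x y e e0; rewrite /ccl subrr cabs0. Qed.

End P8.
Section Main.
Variables (R : realType) (K L : nat) (n : 'I_K -> nat) (l : 'I_L -> nat)
  (phi : Alg R n -> Alg R l) (a : 'I_L -> 'I_K -> nat).
Local Notation C := (R[i]).
Local Notation cabs := (@cabs R).
Local Notation expi := (@expi R).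
Hypothesis Hsh : is_starhom phi.
Variables (lam : forall i j, 'I_(a i j) -> R -> C) (w : forall i j, R -> 'M[C]_(a i j)).
Arguments lam : clear implicits. Arguments w : clear implicits.
Hypothesis Hlamc : forall i j p, cont01C (lam i j p).
Hypothesis Hlamn : forall i j p t, in01 t -> cabs (lam i j p t) = 1.
Hypothesis Hwc : forall i j, cont01M (w i j).
Hypothesis Hwu : forall i j t, in01 t -> Defs.unitarymx (w i j t).
Hypothesis Hw0 : forall i j, w i j 0 = 1%:M.
Hypothesis Hform : forall g, inAlg g -> forall i t, in01 t ->
  phi g i t = padmx (l i) (\mxdiag_(j < K) elemFormula (lam i j) (w i j) (g j) t).
Variable T : 'I_L -> 'I_K -> R.
Hypothesis HT0 : forall i j, 0 <= T i j.
Hypothesis HT1 : forall i j, T i j < 1.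
Hypothesis HTb0 : forall i j p, thetap (lam i j p 0) <= T i j.
Hypothesis HTb1 : forall i j p, thetap (lam i j p 1) <= T i j.

Definition cT i j := T i j / (1 - T i j).
Definition rho i j (m r : R) := if r <= T i j then m * r else m * (cT i j * (1 - r)).
Definition hh (g : Alg R n) i m : Alg R n := fun j r => g j (rho i j m r).
Definition mu (u : R) := if u <= 1/2 then 1 - 2 * u else 0.

Lemma cT_ge0 i j : 0 <= cT i j.
Proof. by rewrite /cT divr_ge0 // subr_ge0 ltW. Qed.

Lemma cT_prop i j : cT i j * (1 - T i j) = T i j.
Proof. by rewrite /cT divfK // subr_eq0 eq_sym lt_eqF. Qed.

Lemma rho_range i j m r : 0 <= m <= 1 -> 0 <= r <= 1 -> 0 <= rho i j m r <= 1.
Proof.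
move=> /andP[m0 m1] /andP[r0 r1]; rewrite /rho.
have c0 := cT_ge0 i j; have cp := cT_prop i j; have t1 := HT1 i j.
case: (leP r (T i j)) => h.
  by apply/andP; split; nra.
have h1 : cT i j * (1 - r) <= T i j.
  by rewrite -cp ler_wpM2l //; lra.
have h2 : 0 <= cT i j * (1 - r) by rewrite mulr_ge0 // subr_ge0.
by apply/andP; split; nra.
Qed.

Lemma rho0 i j m : rho i j m 0 = 0.
Proof. by rewrite /rho HT0 mulr0. Qed.

Lemma rho1 i j m : rho i j m 1 = 0.
Proof.
rewrite /rho; case: (leP 1 (T i j)) => h; first by have := HT1 i j; lra.
by rewrite subrr mulr0 mulr0.
Qed.

Lemma rho_theta i j m c : thetap c <= T i j -> rho i j m (theta c) = m * thetap c.
Proof.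
rewrite /thetap; case: eqP => [->|_] h; first by rewrite rho1 mulr0.
by rewrite /rho h.
Qed.

Lemma cont01M_contP m (f : R -> 'M[C]_m) : cont01M f -> contP (mcl f) 0 1.
Proof. by []. Qed.

Lemma contP_cont01M m (f : R -> 'M[C]_m) : contP (mcl f) 0 1 -> cont01M f.
Proof. by []. Qed.

Lemma hh_in g i m : inAlg g -> 0 <= m <= 1 -> inAlg (hh g i m).
Proof.
move=> hg hm j; split; last by rewrite /hh rho0 rho1.
apply: contP_cont01M.
have hgj := cont01M_contP (hg j).1.
have T0 := HT0 i j; have T1 := HT1 i j.
apply: (@contP_glue _ _ 0 (T i j) 1) => //; first exact: ltW.
  apply: (@mcl_ext _ _ _ _ (fun r => g j (m * r + 0))).
    by move=> x /andP[x0 x1]; rewrite /hh /rho x1 addr0.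
  apply: mcl_affine hgj => x /andP[x0 x1].
  have hx : 0 <= x <= 1 by apply/andP; split; lra.
  by have := rho_range i j hm hx; rewrite /rho x1 addr0.
apply: (@mcl_ext _ _ _ _ (fun r => g j ((- (m * cT i j)) * r + m * cT i j))).
  move=> x /andP[x0 x1]; rewrite /hh /rho.
  case: (leP x (T i j)) => h.
    have -> : x = T i j by apply/eqP; rewrite eq_le h x0.
    have cp := cT_prop i j.
    congr (g j _); rewrite -{1}cp; ring.
  by congr (g j _); ring.
apply: mcl_affine hgj => x /andP[x0 x1].
have hx : 0 <= x <= 1 by apply/andP; split; lra.
have := rho_range i j hm hx.
rewrite /rho; case: (leP x (T i j)) => h.
  have -> : x = T i j by apply/eqP; rewrite eq_le h x0.
  have cp := cT_prop i j.
  have -> : - (m * cT i j) * T i j + m * cT i j = m * (cT i j * (1 - T i j)) by ring.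
  by rewrite cp.
have -> : - (m * cT i j) * x + m * cT i j = m * (cT i j * (1 - x)) by ring.
by [].
Qed.

Lemma elemF_eq nn aa (lam1 lam2 : 'I_aa -> R -> C) (w1 w2 : R -> 'M[C]_aa)
  (f1 f2 : R -> 'M[C]_nn) t1 t2 :
  w1 t1 = w2 t2 -> (forall p, evalT f1 (lam1 p t1) = evalT f2 (lam2 p t2)) ->
  elemFormula lam1 w1 f1 t1 = elemFormula lam2 w2 f2 t2.
Proof.
move=> hw hl; rewrite /elemFormula hw.
by congr (_ *m _ *m _); apply: eq_bigr => p _; rewrite hl.
Qed.

Lemma evalh g i j m p (tau : R) : tau = 0 \/ tau = 1 ->
  evalT (hh g i m j) (lam i j p tau) = g j (m * thetap (lam i j p tau)).
Proof.
move=> ht; rewrite evalTE /hh rho_theta //.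
by case: ht => ->; [apply: HTb0 | apply: HTb1].
Qed.

Lemma R2 g i (tau : R) : inAlg g -> tau = 0 \/ tau = 1 ->
  phi (hh g i 1) i tau = phi g i tau.
Proof.
move=> hg ht.
have ht01 : in01 tau by case: ht => ->; rewrite /in01 ?lexx ?ler01.
have hh1 : inAlg (hh g i 1) by apply: hh_in; rewrite ?lexx ?ler01.
rewrite (Hform hh1 i ht01) (Hform hg i ht01).
apply: (congr1 (padmx (l i))); apply: eq_mxdiag => j; apply: elemF_eq => // p.
by rewrite evalh // mul1r evalT_theta_p //; exact: (hg j).2.
Qed.

Lemma elemF0 j i (f : R -> 'M[C]_(n j)) :
  elemFormula (lam i j) (w i j) f 0 = \sum_(p < a i j) delta_mx p p *t evalT f (lam i j p 0).
Proof.
rewrite /elemFormula Hw0 tens11 adjmx1 mulmx1.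
by rewrite mul_scalar_mx scale1r.
Qed.

Lemma Q0E g i m : inAlg g -> 0 <= m <= 1 ->
  phi (hh g i m) i 0 = padmx (l i) (\mxdiag_(j < K)
     \sum_(p < a i j) delta_mx p p *t g j (m * thetap (lam i j p 0))).
Proof.
move=> hg hm; rewrite Hform //; last by rewrite /in01 lexx ler01.
  apply: (congr1 (padmx (l i))); apply: eq_mxdiag => j; rewrite elemF0.
  by apply: eq_bigr => p _; rewrite evalh //; left.
exact: hh_in.
Qed.

Lemma mxsubE mm nn (A B : 'M[C]_(mm, nn)) k k' : (A - B) k k' = A k k' - B k k'.
Proof. by rewrite !mxE. Qed.

Lemma Q0cont g i : inAlg g -> contP (mcl (fun m => phi (hh g i m) i 0)) 0 1.
Proof.
move=> hg.
apply: (@mcl_ext _ _ _ _ (fun m => padmx (l i) (\mxdiag_(j < K)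
     \sum_(p < a i j) delta_mx p p *t g j (m * thetap (lam i j p 0))))).
  by move=> x hx; apply: Q0E.
move=> x0 hx0 e e0.
have e20 : 0 < e / 2 by rewrite divr_gt0.
pose P (j : 'I_K) (d : R) := forall x, 0 <= x <= 1 -> `|x - x0| < d ->
  forall p : 'I_(a i j), mbound (g j (x * thetap (lam i j p 0)) - g j (x0 * thetap (lam i j p 0))) (e / 2).
have [d d0 Hd] : exists2 d : R, 0 < d & forall j, P j d.
  apply: fin_delta.
    by move=> j d d' hd d'0 d'd x hx xd; apply: hd => //; apply: lt_le_trans d'd.
  move=> j.
  pose Pp (p : 'I_(a i j)) (d : R) := forall x, 0 <= x <= 1 -> `|x - x0| < d ->
    mbound (g j (x * thetap (lam i j p 0)) - g j (x0 * thetap (lam i j p 0))) (e / 2).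
  have [d d0 Hd] : exists2 d : R, 0 < d & forall p, Pp p d.
    apply: fin_delta.
      by move=> p d d' hd d'0 d'd x hx xd; apply: hd => //; apply: lt_le_trans d'd.
    move=> p.
    have hc : contP (mcl (fun x => g j (thetap (lam i j p 0) * x + 0))) 0 1.
      apply: mcl_affine (cont01M_contP (hg j).1) => x /andP[x0' x1].
      have := thetap01 (lam i j p 0) => /andP[t0 t1].
      by rewrite addr0; apply/andP; split; nra.
    have [d d0 Hd] := hc x0 hx0 (e / 2) e20.
    exists d => // x hx xd k k'; rewrite mxE.
    have := Hd x hx xd k k'; rewrite !addr0 ![thetap _ * _]mulrC => /ltW.
    by rewrite mxE.
  by exists d => // x hx xd p; apply: Hd.
exists d => // x hx xd k k'.
rewrite -mxsubE -padmxB -mxdiagB.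
apply: (@le_lt_trans _ _ (e / 2)); last by rewrite ltr_pdivrMr // ltr_pMr // ltr1n.
apply: padmx_bound; last exact: ltW.
apply: mxdiag_bound; last exact: ltW.
move=> j; rewrite tens_sumB; apply: tens_sum_bound; last exact: ltW.
by move=> p; apply: Hd.
Qed.
Definition G (g : Alg R n) i x :=
  if x <= 0 then phi (hh g i (mu (- x))) i 0
  else if x < 1 then phi g i x else phi (hh g i (mu (x - 1))) i 1.

Lemma mu_range u : 0 <= u -> 0 <= mu u <= 1.
Proof. by move=> u0; rewrite /mu; case: (leP u (1/2)) => h; apply/andP; split; lra. Qed.

Lemma mu0 : mu 0 = 1.
Proof. by rewrite /mu ifT ?mulr0 ?subr0 //; lra. Qed.

Lemma mu_hi u : 1/2 <= u -> mu u = 0.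
Proof. by move=> h; rewrite /mu; case: (leP u (1/2)) => h2 //; lra. Qed.

Lemma mu_lo u : u <= 1/2 -> mu u = 1 - 2 * u.
Proof. by move=> h; rewrite /mu h. Qed.

Lemma phi_per g i : inAlg g -> phi g i 1 = phi g i 0.
Proof. by move=> hg; rewrite ((Hsh.1 g hg) i).2. Qed.

Lemma phi_cont g i : inAlg g -> contP (mcl (phi g i)) 0 1.
Proof. by move=> hg; exact: ((Hsh.1 g hg) i).1. Qed.

Lemma Gcont g i : inAlg g -> contP (mcl (G g i)) (-1) 2.
Proof.
move=> hg.
have Q := Q0cont i hg.
have hhm : forall m, 0 <= m <= 1 -> inAlg (hh g i m) by move=> m hm; exact: hh_in.
apply: (@contP_glue _ _ (-1) 0 2); try lra.
  apply: (@contP_glue _ _ (-1) (-(1/2)) 0); try lra.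
    apply: (@mcl_ext _ _ _ _ (fun _ => phi (hh g i 0) i 0)); last exact: mcl_const.
    move=> x /andP[x1 x2]; rewrite /G ifT; last lra.
    by rewrite mu_hi //; lra.
  apply: (@mcl_ext _ _ _ _ (fun x => phi (hh g i (2 * x + 1)) i 0)).
    move=> x /andP[x1 x2]; rewrite /G ifT //.
    by rewrite mu_lo; [congr (phi (hh g i _) i 0); ring | lra].
  apply: mcl_affine Q => x /andP[x1 x2]; apply/andP; split; lra.
apply: (@contP_glue _ _ 0 1 2); try lra.
  apply: (@mcl_ext _ _ _ _ (phi g i)); last exact: phi_cont.
  move=> x /andP[x1 x2]; rewrite /G.
  case: (leP x 0) => h1.
    have -> : x = 0 by lra.
    by rewrite oppr0 mu0 R2 //; left.
  case: (ltP x 1) => h2 //.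
  have -> : x = 1 by lra.
  by rewrite subrr mu0 R2 //; right.
apply: (@contP_glue _ _ 1 (3/2) 2); try lra.
  apply: (@mcl_ext _ _ _ _ (fun x => phi (hh g i ((-2) * x + 3)) i 0)).
    move=> x /andP[x1 x2]; rewrite /G ifF; last by apply/negbTE; rewrite -ltNge; lra.
    rewrite ifF; last by apply/negbTE; rewrite -leNgt; lra.
    rewrite phi_per; last by apply: hhm; apply: mu_range; lra.
    by rewrite mu_lo; [congr (phi (hh g i _) i 0); ring | lra].
  apply: mcl_affine Q => x /andP[x1 x2]; apply/andP; split; lra.
apply: (@mcl_ext _ _ _ _ (fun _ => phi (hh g i 0) i 0)); last exact: mcl_const.
move=> x /andP[x1 x2]; rewrite /G ifF; last by apply/negbTE; rewrite -ltNge; lra.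
rewrite ifF; last by apply/negbTE; rewrite -leNgt; lra.
rewrite phi_per; last by apply: hhm; apply: mu_range; lra.
by rewrite mu_hi //; lra.
Qed.
Definition kk (s t : R) := (1 + 2 * s) * t - s.
Definition phis (s : R) (g : Alg R n) : Alg R l := fun i t => G g i (kk s t).

Lemma kk_range s t : in01 s -> in01 t -> -1 <= kk s t <= 2.
Proof. by rewrite /in01 /kk => /andP[s0 s1] /andP[t0 t1]; apply/andP; split; nra. Qed.

Lemma in01_0 : in01 (0 : R). Proof. by rewrite /in01 lexx ler01. Qed.
Lemma in01_1 : in01 (1 : R). Proof. by rewrite /in01 lexx ler01. Qed.

Lemma phis_in s g : in01 s -> inAlg g -> inAlg (phis s g).
Proof.
move=> hs hg i; split.
  apply: contP_cont01M; rewrite /phis.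
  apply: mcl_affine (Gcont i hg) => t ht.
  by have := kk_range hs ht.
rewrite /phis /kk mulr0 sub0r mulr1.
move: hs; rewrite /in01 => /andP[s0 s1].
rewrite /G ifT; last lra.
rewrite ifF; last by apply/negbTE; rewrite -ltNge; lra.
rewrite ifF; last by apply/negbTE; rewrite -leNgt; lra.
rewrite phi_per; last by apply: hh_in => //; apply: mu_range; lra.
by rewrite opprK; congr (phi (hh g i (mu _)) i 0); ring.
Qed.

Definition opA2 (bop : forall k, 'M[C]_k -> 'M[C]_k -> 'M[C]_k) K' (nn : 'I_K' -> nat)
  (g h : Alg R nn) : Alg R nn := fun j t => bop _ (g j t) (h j t).
Definition opA1 (uop : forall k, 'M[C]_k -> 'M[C]_k) K' (nn : 'I_K' -> nat)
  (g : Alg R nn) : Alg R nn := fun j t => uop _ (g j t).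

Lemma phis_op2 bop s g h :
  (forall g h, inAlg g -> inAlg h -> eqAlg (phi (opA2 bop g h)) (opA2 bop (phi g) (phi h))) ->
  in01 s -> inAlg g -> inAlg h ->
  eqAlg (phis s (opA2 bop g h)) (opA2 bop (phis s g) (phis s h)).
Proof.
move=> H hs hg hh' i t ht; rewrite /phis /G /opA2.
have := kk_range hs ht; set x := kk s t => /andP[x1 x2].
case: (leP x 0) => h1.
  have hm : 0 <= mu (- x) <= 1 by apply: mu_range; lra.
  exact: (H _ _ (hh_in i hg hm) (hh_in i hh' hm) i 0 in01_0).
case: (ltP x 1) => h2.
  by apply: (H _ _ hg hh' i x); rewrite /in01; apply/andP; split; lra.
have hm : 0 <= mu (x - 1) <= 1 by apply: mu_range; lra.
exact: (H _ _ (hh_in i hg hm) (hh_in i hh' hm) i 1 in01_1).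
Qed.

Lemma phis_op1 uop s g :
  (forall g, inAlg g -> eqAlg (phi (opA1 uop g)) (opA1 uop (phi g))) ->
  in01 s -> inAlg g -> eqAlg (phis s (opA1 uop g)) (opA1 uop (phis s g)).
Proof.
move=> H hs hg i t ht; rewrite /phis /G /opA1.
have := kk_range hs ht; set x := kk s t => /andP[x1 x2].
case: (leP x 0) => h1.
  have hm : 0 <= mu (- x) <= 1 by apply: mu_range; lra.
  exact: (H _ (hh_in i hg hm) i 0 in01_0).
case: (ltP x 1) => h2.
  by apply: (H _ hg i x); rewrite /in01; apply/andP; split; lra.
have hm : 0 <= mu (x - 1) <= 1 by apply: mu_range; lra.
exact: (H _ (hh_in i hg hm) i 1 in01_1).
Qed.

Lemma phis_starhom s : in01 s -> is_starhom (phis s).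
Proof.
move=> hs.
have [H1 [H2 [H3 [H4 H5]]]] := Hsh.
split; first by move=> g hg; exact: phis_in.
split; first by move=> g h hg hh'; exact: (@phis_op2 (fun k x y => x + y) s g h H2 hs hg hh').
split; first by move=> c g hg; exact: (@phis_op1 (fun k x => c *: x) s g (H3 c) hs hg).
split; first by move=> g h hg hh'; exact: (@phis_op2 (fun k x y => x *m y) s g h H4 hs hg hh').
by move=> g hg; exact: (@phis_op1 (fun k x => adjmx x) s g H5 hs hg).
Qed.

Lemma phis0 g : inAlg g -> eqAlg (phis 0 g) (phi g).
Proof.
move=> hg i t; rewrite /in01 => /andP[t0 t1]; rewrite /phis /kk mulr0 addr0 mul1r subr0 /G.
case: (leP t 0) => h1.
  have -> : t = 0 by lra.
  by rewrite oppr0 mu0 R2 //; left.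
case: (ltP t 1) => h2 //.
have -> : t = 1 by lra.
by rewrite subrr mu0 R2 //; right.
Qed.

Lemma phis_cont : pointwise_norm_cont phis.
Proof.
move=> g hg s0 hs0 e e0.
have [d d0 Hd] : exists2 d : R, 0 < d & forall i : 'I_L, forall x y, -1 <= x <= 2 -> -1 <= y <= 2 ->
    `|x - y| < d -> mcl (G g i) x y e.
  apply: fin_delta.
    by move=> i d d' hd d'0 d'd x y hx hy xy; apply: hd => //; apply: lt_le_trans d'd.
  move=> i; apply: HC => //; first lra.
  - by move=> x y e1 h k k'; rewrite cabsB.
  - move=> x y z e1 e2 h1 h2 k k'.
    by apply: le_lt_trans (cabs_tri _ (G g i y k k') _) _; rewrite ltrD.
  - exact: Gcont.
exists d => // s hs sd i t ht k k'.
rewrite /phis; apply: Hd; try exact: kk_range.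
apply: le_lt_trans sd.
rewrite /kk.
have -> : (1 + 2 * s) * t - s - ((1 + 2 * s0) * t - s0) = (s - s0) * (2 * t - 1) by ring.
rewrite normrM ler_piMr ?normr_ge0 //.
by move: ht; rewrite /in01 => /andP[t0 t1]; rewrite ler_norml; apply/andP; split; lra.
Qed.
Hypothesis Hsum : forall i, (\sum_(j < K) a i j * n j <= l i)%N.

Definition tau (x : R) := if x <= 0 then 0 else if x < 1 then x else if x <= 3/2 then 1 else 4 - 2 * x.
Unset Implicit Arguments.
Definition wB i j t := w i j (tau (3 * t - 1)).
Definition lamB i j p t :=
  if 3 * t - 1 <= 0 then expi (mu (- (3 * t - 1)) * thetap (lam i j p 0))
  else if 3 * t - 1 < 1 then lam i j p (3 * t - 1)
  else expi (mu (3 * t - 1 - 1) * thetap (lam i j p 1)).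
Set Implicit Arguments.

Lemma tau_range x : -1 <= x <= 2 -> in01 (tau x).
Proof.
move=> /andP[x1 x2]; rewrite /tau /in01.
case: (leP x 0) => h1; first by rewrite lexx ler01.
case: (ltP x 1) => h2; first by apply/andP; split; lra.
case: (leP x (3/2)) => h3; first by rewrite ler01 lexx.
by apply/andP; split; lra.
Qed.

Lemma wB_cont i j : cont01M (wB i j).
Proof.
apply: contP_cont01M.
have hw := cont01M_contP (Hwc i j).
apply: (@contP_glue _ _ 0 (1/3) 1); try lra.
  apply: (@mcl_ext _ _ _ _ (fun _ => w i j 0)); last exact: mcl_const.
  by move=> t /andP[t0 t1]; rewrite /wB /tau ifT //; lra.
apply: (@contP_glue _ _ (1/3) (2/3) 1); try lra.
  apply: (@mcl_ext _ _ _ _ (fun t => w i j (3 * t + (-1)))).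
    move=> t /andP[t0 t1]; rewrite /wB /tau.
    case: (leP (3 * t - 1) 0) => h1; first by congr (w i j _); lra.
    case: (ltP (3 * t - 1) 1) => h2 //.
    by rewrite ifT; [congr (w i j _); lra | lra].
  by apply: mcl_affine hw => t /andP[t0 t1]; apply/andP; split; lra.
apply: (@contP_glue _ _ (2/3) (5/6) 1); try lra.
  apply: (@mcl_ext _ _ _ _ (fun _ => w i j 1)); last exact: mcl_const.
  move=> t /andP[t0 t1]; rewrite /wB /tau ifF; last by apply/negbTE; rewrite -ltNge; lra.
  by rewrite ifF ?ifT //; [lra | apply/negbTE; rewrite -leNgt; lra].
apply: (@mcl_ext _ _ _ _ (fun t => w i j ((-6) * t + 6))).
  move=> t /andP[t0 t1]; rewrite /wB /tau ifF; last by apply/negbTE; rewrite -ltNge; lra.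
  rewrite ifF; last by apply/negbTE; rewrite -leNgt; lra.
  case: (leP (3 * t - 1) (3/2)) => h; congr (w i j _); lra.
by apply: mcl_affine hw => t /andP[t0 t1]; apply/andP; split; lra.
Qed.

Lemma wB_unit i j t : in01 t -> Defs.unitarymx (wB i j t).
Proof.
move=> ht; apply: Hwu; apply: tau_range.
by move: ht; rewrite /in01 => /andP[t0 t1]; apply/andP; split; lra.
Qed.

Lemma wB0 i j : wB i j 0 = 1%:M.
Proof. by rewrite /wB /tau ifT ?Hw0 //; lra. Qed.

Lemma wB1 i j : wB i j 1 = 1%:M.
Proof.
rewrite /wB /tau ifF; last by apply/negbTE; rewrite -ltNge; lra.
rewrite ifF; last by apply/negbTE; rewrite -leNgt; lra.
rewrite ifF; last by apply/negbTE; rewrite -ltNge; lra.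
by rewrite -(Hw0 i j); congr (w i j _); lra.
Qed.

Lemma vperm1 aa : vperm R (1%g : 'S_aa) = (1%:M : 'M[C]_aa).
Proof. by apply/matrixP => x y; rewrite !mxE perm1. Qed.

Lemma lamB_cont i j p : cont01C (lamB i j p).
Proof.
have hl : contP (ccl (lam i j p)) 0 1 by exact: Hlamc.
set t0 := thetap (lam i j p 0); set t1 := thetap (lam i j p 1).
have e0 : expi t0 = lam i j p 0 by apply: thetap_expi; apply: Hlamn; exact: in01_0.
have e1 : expi t1 = lam i j p 1 by apply: thetap_expi; apply: Hlamn; exact: in01_1.
suff H : contP (ccl (lamB i j p)) 0 1 by exact: H.
apply: (@contP_glue _ _ 0 (1/6) 1); [lra | lra | | ].
  apply: (@ccl_ext _ _ (fun t => expi (0 * t + 0))); last exact: expi_affine.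
  move=> t /andP[ta tb]; rewrite /lamB ifT; last lra.
  by rewrite mu_hi ?mul0r ?addr0 //; lra.
apply: (@contP_glue _ _ (1/6) (1/3) 1); [lra | lra | | ].
  apply: (@ccl_ext _ _ (fun t => expi ((6 * t0) * t + (- t0)))); last exact: expi_affine.
  move=> t /andP[ta tb]; rewrite /lamB ifT; last lra.
  by rewrite mu_lo; [apply: congr1; rewrite /t0 /t1; ring | lra].
apply: (@contP_glue _ _ (1/3) (2/3) 1); [lra | lra | | ].
  apply: (@ccl_ext _ _ (fun t => lam i j p (3 * t + (-1)))).
    move=> t /andP[ta tb]; rewrite /lamB.
    case: (leP (3 * t - 1) 0) => h1.
      have -> : 3 * t - 1 = 0 by lra.
      by rewrite oppr0 mu0 mul1r; exact: e0.
    case: (ltP (3 * t - 1) 1) => h2 //.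
    have -> : 3 * t - 1 = 1 by lra.
    by rewrite subrr mu0 mul1r; exact: e1.
  by apply: ccl_affine hl => t /andP[ta tb]; apply/andP; split; lra.
apply: (@contP_glue _ _ (2/3) (5/6) 1); [lra | lra | | ].
  apply: (@ccl_ext _ _ (fun t => expi ((- (6 * t1)) * t + 5 * t1))); last exact: expi_affine.
  move=> t /andP[ta tb]; rewrite /lamB ifF; last by apply/negbTE; rewrite -ltNge; lra.
  rewrite ifF; last by apply/negbTE; rewrite -leNgt; lra.
  by rewrite mu_lo; [apply: congr1; rewrite /t0 /t1; ring | lra].
apply: (@ccl_ext _ _ (fun t => expi (0 * t + 0))); last exact: expi_affine.
move=> t /andP[ta tb]; rewrite /lamB ifF; last by apply/negbTE; rewrite -ltNge; lra.
rewrite ifF; last by apply/negbTE; rewrite -leNgt; lra.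
by rewrite mu_hi ?mul0r ?addr0 //; lra.
Qed.

Lemma lamB_norm i j p t : in01 t -> cabs (lamB i j p t) = 1.
Proof.
rewrite /in01 => /andP[ta tb]; rewrite /lamB.
case: (leP (3 * t - 1) 0) => h1; first exact: expi_norm.
case: (ltP (3 * t - 1) 1) => h2; last exact: expi_norm.
by apply: Hlamn; rewrite /in01; apply/andP; split; lra.
Qed.

Lemma lamB01 i j p : lamB i j p 0 = lamB i j p 1.
Proof.
rewrite /lamB ifT; last lra.
rewrite ifF; last by apply/negbTE; rewrite -ltNge; lra.
rewrite ifF; last by apply/negbTE; rewrite -leNgt; lra.
by rewrite !mu_hi ?mul0r //; lra.
Qed.
Lemma elemF_const nn aa (lam1 : 'I_aa -> R -> C) (w1 : R -> 'M[C]_aa)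
  (f : R -> 'M[C]_nn) t (M : 'M[C]_nn) :
  Defs.unitarymx (w1 t) -> (forall p, evalT f (lam1 p t) = M) ->
  elemFormula lam1 w1 f t = \sum_(p < aa) delta_mx p p *t M.
Proof.
move=> hu hM; rewrite /elemFormula.
rewrite (eq_bigr (fun p => delta_mx p p *t M)); first exact: lemmaK.
by move=> p _; rewrite hM.
Qed.

Lemma in01_mul (x y : R) : 0 <= x <= 1 -> 0 <= y < 1 -> in01 (x * y).
Proof. by move=> /andP[x0 x1] /andP[y0 y1]; rewrite /in01; apply/andP; split; nra. Qed.

Lemma phis1_typeB : typeB (phis 1) a.
Proof.
split; first exact: Hsum.
exists (fun i j f t => elemFormula (lamB i j) (wB i j) f t).
split.
  move=> i j; exists 1%g, (lamB i j), (wB i j); split; last by split.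
  split; first by move=> p; split; [exact: lamB_cont | exact: lamB_norm].
  split; first by move=> p; rewrite perm1; exact: lamB01.
  split; first exact: wB_cont.
  split; first exact: wB_unit.
  by split; [exact: wB0 | rewrite wB1 vperm1].
move=> g hg i t ht.
have hk : kk 1 t = 3 * t - 1 by rewrite /kk; ring.
rewrite /phis hk /G.
move: (ht); rewrite /in01 => /andP[t0 t1].
case: (leP (3 * t - 1) 0) => h1.
  have hm : 0 <= mu (- (3 * t - 1)) <= 1 by apply: mu_range; lra.
  rewrite (Hform (hh_in i hg hm) i in01_0).
  apply: (congr1 (padmx (l i))); apply: eq_mxdiag => j; apply: elemF_eq.
    by rewrite /wB /tau ifT.
  move=> p; rewrite evalh; last by left.
  rewrite /lamB ifT // evalT_expi //; first exact: (hg j).2.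
  by apply: in01_mul => //; exact: thetap01.
case: (ltP (3 * t - 1) 1) => h2.
  have hx : in01 (3 * t - 1) by rewrite /in01; apply/andP; split; lra.
  rewrite (Hform hg i hx).
  apply: (congr1 (padmx (l i))); apply: eq_mxdiag => j; apply: elemF_eq.
    by rewrite /wB /tau ifF ?ifT //; apply/negbTE; rewrite -ltNge.
  by move=> p; rewrite /lamB ifF ?ifT //; apply/negbTE; rewrite -ltNge.
have hm : 0 <= mu (3 * t - 1 - 1) <= 1 by apply: mu_range; lra.
rewrite (Hform (hh_in i hg hm) i in01_1).
apply: (congr1 (padmx (l i))); apply: eq_mxdiag => j.
case: (leP (3 * t - 1) (3/2)) => h3.
  apply: elemF_eq.
    rewrite /wB /tau ifF; last by apply/negbTE; rewrite -ltNge.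
    by rewrite ifF ?ifT //; apply/negbTE; rewrite -leNgt.
  move=> p; rewrite evalh; last by right.
  rewrite /lamB ifF; last by apply/negbTE; rewrite -ltNge.
  rewrite ifF; last by apply/negbTE; rewrite -leNgt.
  rewrite evalT_expi //; first exact: (hg j).2.
  by apply: in01_mul => //; exact: thetap01.
have m0 : mu (3 * t - 1 - 1) = 0 by apply: mu_hi; lra.
rewrite (@elemF_const _ _ _ _ _ _ (g j 0)); first last.
- by move=> p; rewrite evalh ?m0 ?mul0r //; right.
- exact: (Hwu i j in01_1).
rewrite (@elemF_const _ _ _ _ _ _ (g j 0)) //; first exact: wB_unit.
move=> p; rewrite /lamB ifF; last by apply/negbTE; rewrite -ltNge.
rewrite ifF; last by apply/negbTE; rewrite -leNgt.
rewrite m0 mul0r evalT_expi //; first exact: (hg j).2.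
exact: in01_0.
Qed.

Lemma main_sec : exists phis0 : R -> Alg R n -> Alg R l,
    (forall s, in01 s -> is_starhom (phis0 s)) /\
    (forall g, inAlg g -> eqAlg (phis0 0 g) (phi g)) /\
    typeB (phis0 1) a /\
    pointwise_norm_cont phis0.
Proof.
exists phis; split; first exact: phis_starhom.
split; first exact: phis0.
split; first exact: phis1_typeB.
exact: phis_cont.
Qed.
End Main.

Theorem theorem3p3 (R : realType) (K L : nat) (n : 'I_K -> nat) (l : 'I_L -> nat)
    (phi : Alg R n -> Alg R l) (a : 'I_L -> 'I_K -> nat) :
  is_starhom phi -> typeA phi a ->
  exists phis : R -> Alg R n -> Alg R l,
    (forall s, in01 s -> is_starhom (phis s)) /\
    (forall g, inAlg g -> eqAlg (phis 0 g) (phi g)) /\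
    typeB (phis 1) a /\
    pointwise_norm_cont phis.
Proof.
move=> Hsh [Hsum [Phi [HPhi Hform0]]].
have H1 : forall i j, exists lw : ('I_(a i j) -> R -> R[i]) * (R -> 'M[R[i]]_(a i j)),
    (exists sigma, elem_data sigma lw.1 lw.2) /\
    forall f, CTM f -> forall t, in01 t -> Phi i j f t = elemFormula lw.1 lw.2 f t.
  move=> i j; have [sigma [lam0 [w0 [hd [_ hf]]]]] := HPhi i j.
  by exists (lam0, w0); split; [exists sigma | ].
pose lam i j := (proj1_sig (cid (H1 i j))).1.
pose w i j := (proj1_sig (cid (H1 i j))).2.
have Hd : forall i j, exists sigma, elem_data sigma (lam i j) (w i j).
  by move=> i j; rewrite /lam /w; case: (cid (H1 i j)) => lw [].
have Hf : forall i j f, CTM f -> forall t, in01 t -> Phi i j f t = elemFormula (lam i j) (w i j) f t.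
  by move=> i j; rewrite /lam /w; case: (cid (H1 i j)) => lw [].
have Hlamc : forall i j p, cont01C (lam i j p).
  by move=> i j p; have [sigma [h _]] := Hd i j; exact: (h p).1.
have Hlamn : forall i j p t, in01 t -> cabs (lam i j p t) = 1.
  by move=> i j p; have [sigma [h _]] := Hd i j; exact: (h p).2.
have Hwc : forall i j, cont01M (w i j).
  by move=> i j; have [sigma [_ [_ [h _]]]] := Hd i j.
have Hwu : forall i j t, in01 t -> Defs.unitarymx (w i j t).
  by move=> i j; have [sigma [_ [_ [_ [h _]]]]] := Hd i j.
have Hw0 : forall i j, w i j 0 = 1%:M.
  by move=> i j; have [sigma [_ [_ [_ [_ [h _]]]]]] := Hd i j.
have Hform : forall g, inAlg g -> forall i t, in01 t ->
    phi g i t = padmx (l i) (\mxdiag_(j < K) elemFormula (lam i j) (w i j) (g j) t).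
  move=> g hg i t ht; rewrite Hform0 //.
  by apply: (congr1 (padmx (l i))); apply: eq_mxdiag => j; apply: Hf.
have HT : forall i j, exists T : R, [/\ 0 <= T, T < 1 &
    forall p, Order.max (thetap (lam i j p 0)) (thetap (lam i j p 1)) <= T].
  move=> i j; apply: fin_bound => p.
  have /andP[a0 a1] := thetap01 (lam i j p 0).
  have /andP[b0 b1] := thetap01 (lam i j p 1).
  by rewrite le_max a0 /= gt_max a1 b1.
pose T i j := proj1_sig (cid (HT i j)).
have HTp : forall i j, [/\ 0 <= T i j, T i j < 1 &
    forall p, Order.max (thetap (lam i j p 0)) (thetap (lam i j p 1)) <= T i j].
  by move=> i j; rewrite /T; case: (cid (HT i j)).
apply: (@main_sec R K L n l phi a Hsh lam w Hlamc Hlamn Hwc Hwu Hw0 Hform T).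
- by move=> i j; case: (HTp i j).
- by move=> i j; case: (HTp i j).
- by move=> i j p; case: (HTp i j) => _ _ /(_ p); rewrite ge_max => /andP[].
- by move=> i j p; case: (HTp i j) => _ _ /(_ p); rewrite ge_max => /andP[].
- exact: Hsum.
Qed.
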